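(* Let $(x,y)\mapsto x\cdot y$ be the symmetric bilinear form associated to a positive definite quadratic form on $\mathbb{R}^2$. Let $b_1,b_2\in\mathbb{R}^2$ be linearly independent and $v_1,v_2\in\mathbb{R}^2$ distinct. If $b_1\cdot b_2\ne 0$, $v_1\cdot v_1=v_2\cdot v_2$, and $|v_1\cdot b_j|=|v_2\cdot b_j|$ for $j=1,2$, then $v_1=-v_2$. *)

(* Defs.v *)
From HB Require Import structures.
From mathcomp Require Import all_boot all_order all_algebra.
Set Implicit Arguments. Unset Strict Implicit. Unset Printing Implicit Defensive.
Import Order.TTheory GRing.Theory Num.Theory.
Local Open Scope ring_scope.

Definition bform (R : realFieldType) (M : 'M[R]_2) (x y : 'rV[R]_2) : R :=
  (x *m M *m y^T) 0 0.

Definition pos_def_sym (R : realFieldType) (M : 'M[R]_2) : Prop :=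
  M^T = M /\ forall x : 'rV[R]_2, x != 0 -> 0 < bform M x x.

(* Main.v *)
Require Import Defs.
From HB Require Import structures.
From mathcomp Require Import all_boot all_order all_algebra.
From mathcomp Require Import ring lra.
From mathcomp Require Import reals.
Import Order.TTheory GRing.Theory Num.Theory.
Local Open Scope ring_scope.

Definition B {R : realFieldType} (a c e x0 x1 y0 y1 : R) :=
  x0 * a * y0 + x1 * c * y0 + x0 * c * y1 + x1 * e * y1.

Lemma cancel_nz {R : realFieldType} {X k : R} : k != 0 -> X * k = 0 -> X = 0.
Proof. by move=> hk /eqP; rewrite mulf_eq0 (negbTE hk) orbF => /eqP. Qed.

Lemma Mkernel {R : realFieldType} {a c e u0 u1 : R} : a * e - c ^+ 2 != 0 ->
  a * u0 + c * u1 = 0 -> c * u0 + e * u1 = 0 -> u0 = 0 /\ u1 = 0.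
Proof.
move=> hD h0 h1; split; apply: (cancel_nz hD).
  have -> : u0 * (a * e - c ^+ 2) = e * (a * u0 + c * u1) - c * (c * u0 + e * u1) by ring.
  by rewrite h0 h1; ring.
have -> : u1 * (a * e - c ^+ 2) = a * (c * u0 + e * u1) - c * (a * u0 + c * u1) by ring.
by rewrite h0 h1; ring.
Qed.

Lemma nondeg {R : realFieldType} {a c e p0 p1 q0 q1 u0 u1 : R} :
  a * e - c ^+ 2 != 0 -> p0 * q1 - p1 * q0 != 0 ->
  B a c e u0 u1 p0 p1 = 0 -> B a c e u0 u1 q0 q1 = 0 -> u0 = 0 /\ u1 = 0.
Proof.
move=> hD hc hp hq; apply: Mkernel hD _ _; apply: (cancel_nz hc).
  have -> : (a * u0 + c * u1) * (p0 * q1 - p1 * q0) =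
     q1 * B a c e u0 u1 p0 p1 - p1 * B a c e u0 u1 q0 q1 by rewrite /B; ring.
  by rewrite hp hq; ring.
have -> : (c * u0 + e * u1) * (p0 * q1 - p1 * q0) =
   p0 * B a c e u0 u1 q0 q1 - q0 * B a c e u0 u1 p0 p1 by rewrite /B; ring.
by rewrite hp hq; ring.
Qed.

Lemma parallel {R : realFieldType} {a c e p0 p1 s0 s1 d0 d1 : R} :
  a * e - c ^+ 2 != 0 -> (d0 != 0) || (d1 != 0) ->
  B a c e d0 d1 p0 p1 = 0 -> B a c e d0 d1 s0 s1 = 0 -> p0 * s1 - p1 * s0 = 0.
Proof.
move=> hD hd hp hs.
have e0 : (p0 * s1 - p1 * s0) * (a * d0 + c * d1) = 0.
  have -> : (p0 * s1 - p1 * s0) * (a * d0 + c * d1) =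
     s1 * B a c e d0 d1 p0 p1 - p1 * B a c e d0 d1 s0 s1 by rewrite /B; ring.
  by rewrite hp hs; ring.
have e1 : (p0 * s1 - p1 * s0) * (c * d0 + e * d1) = 0.
  have -> : (p0 * s1 - p1 * s0) * (c * d0 + e * d1) =
     p0 * B a c e d0 d1 s0 s1 - s0 * B a c e d0 d1 p0 p1 by rewrite /B; ring.
  by rewrite hp hs; ring.
have [h0|h0] := eqVneq (a * d0 + c * d1) 0.
  have [h1|h1] := eqVneq (c * d0 + e * d1) 0.
    by have [z0 z1] := Mkernel hD h0 h1; move: hd; rewrite z0 z1 eqxx.
  exact: cancel_nz h1 e1.
exact: cancel_nz h0 e0.
Qed.

Lemma final {R : realFieldType} {a c e p0 p1 q0 q1 s0 s1 : R} :
  p0 * s1 - p1 * s0 = 0 -> B a c e s0 s1 q0 q1 = 0 -> B a c e p0 p1 q0 q1 != 0 ->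
  s0 = 0 /\ s1 = 0.
Proof.
move=> hx hs hb; split; apply: (cancel_nz hb).
  have -> : s0 * B a c e p0 p1 q0 q1 = p0 * B a c e s0 s1 q0 q1 - (p0 * s1 - p1 * s0) * (c * q0 + e * q1)
    by rewrite /B; ring.
  by rewrite hx hs; ring.
have -> : s1 * B a c e p0 p1 q0 q1 = p1 * B a c e s0 s1 q0 q1 + (p0 * s1 - p1 * s0) * (a * q0 + c * q1)
  by rewrite /B; ring.
by rewrite hx hs; ring.
Qed.

Lemma absE {R : realFieldType} {x y : R} : `|x| = `|y| -> x = y \/ x = - y.
Proof.
move/(congr1 (fun t => t ^+ 2)); rewrite !real_normK ?num_real //.
move/eqP; rewrite -subr_eq0 subr_sqr mulf_eq0 subr_eq0 addr_eq0.
by case/orP => /eqP; auto.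
Qed.

Lemma scalar_main {R : realFieldType} {a c e p0 p1 q0 q1 v0 v1 w0 w1 : R} :
  a * e - c ^+ 2 != 0 -> p0 * q1 - p1 * q0 != 0 ->
  B a c e p0 p1 q0 q1 != 0 ->
  B a c e v0 v1 v0 v1 = B a c e w0 w1 w0 w1 ->
  `|B a c e v0 v1 p0 p1| = `|B a c e w0 w1 p0 p1| ->
  `|B a c e v0 v1 q0 q1| = `|B a c e w0 w1 q0 q1| ->
  (v0 != w0) || (v1 != w1) -> v0 = - w0 /\ v1 = - w1.
Proof.
move=> hD hc hb hvv /absE hp /absE hq hne.
have hd : (v0 - w0 != 0) || (v1 - w1 != 0) by rewrite !subr_eq0.
have Bd : forall x0 x1, B a c e (v0 - w0) (v1 - w1) x0 x1 = B a c e v0 v1 x0 x1 - B a c e w0 w1 x0 x1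
  by move=> x0 x1; rewrite /B; ring.
have Bs : forall x0 x1, B a c e (v0 + w0) (v1 + w1) x0 x1 = B a c e v0 v1 x0 x1 + B a c e w0 w1 x0 x1
  by move=> x0 x1; rewrite /B; ring.
have Bds : B a c e (v0 - w0) (v1 - w1) (v0 + w0) (v1 + w1) = 0.
  have -> : B a c e (v0 - w0) (v1 - w1) (v0 + w0) (v1 + w1) =
    B a c e v0 v1 v0 v1 - B a c e w0 w1 w0 w1 by rewrite /B; ring.
  by rewrite hvv subrr.
have fin : v0 + w0 = 0 /\ v1 + w1 = 0 -> v0 = - w0 /\ v1 = - w1.
  by case=> /eqP; rewrite addr_eq0 => /eqP -> /eqP; rewrite addr_eq0 => /eqP ->.
case: hp => hp; case: hq => hq.
- have [h0 h1] := nondeg hD hc (etrans (Bd _ _) (etrans (congr1 (fun t => t - _) hp) (subrr _)))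
     (etrans (Bd _ _) (etrans (congr1 (fun t => t - _) hq) (subrr _))).
  by move: hd; rewrite h0 h1 eqxx.
- apply: fin.
  have hx := parallel hD hd (etrans (Bd _ _) (etrans (congr1 (fun t => t - _) hp) (subrr _))) Bds.
  apply: final hx _ hb.
  by rewrite Bs hq addNr.
- apply: fin.
  have hx := parallel hD hd (etrans (Bd _ _) (etrans (congr1 (fun t => t - _) hq) (subrr _))) Bds.
  apply: final hx _ (_ : B a c e q0 q1 p0 p1 != 0).
    by rewrite Bs hp addNr.
  by have -> : B a c e q0 q1 p0 p1 = B a c e p0 p1 q0 q1 by rewrite /B; ring.
- apply: fin; apply: nondeg hD hc _ _.
    by rewrite Bs hp addNr.
  by rewrite Bs hq addNr.
Qed.
Lemma bformE (R : realFieldType) (M : 'M[R]_2) x y :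
  bform M x y = x 0 0 * M 0 0 * y 0 0 + x 0 1 * M 1 0 * y 0 0
   + x 0 0 * M 0 1 * y 0 1 + x 0 1 * M 1 1 * y 0 1.
Proof.
rewrite /bform !mxE !big_ord_recl !big_ord0 ?mxE /=.
rewrite !big_ord_recl !big_ord0.
have E1 : lift ord0 ord0 = 1 :> 'I_2 by apply/val_inj.
have E0 : ord0 = 0 :> 'I_2 by apply/val_inj.
rewrite !E1 !E0; ring.
Qed.
Lemma detE (R : realFieldType) (A : 'M[R]_2) : \det A = A 0 0 * A 1 1 - A 0 1 * A 1 0.
Proof.
rewrite (expand_det_row _ ord0) !big_ord_recl big_ord0 /cofactor !det_mx11 !mxE /=.
have E1 : lift ord0 ord0 = 1 :> 'I_2 by apply/val_inj.
have E0 : ord0 = 0 :> 'I_2 by apply/val_inj.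
have E2 : lift ord0 (0 : 'I_1) = 1 :> 'I_2 by apply/val_inj.
have E3 : lift (lift ord0 ord0) (0 : 'I_1) = 0 :> 'I_2 by apply/val_inj.
rewrite !E3 !E2 ?E1 ?E0 /= ?expr0 ?expr1. ring.
Qed.
Lemma row2_eq (R : realFieldType) (x y : 'rV[R]_2) : x 0 0 = y 0 0 -> x 0 1 = y 0 1 -> x = y.
Proof.
move=> h0 h1; apply/rowP => j.
have [->|->] : j = 0 \/ j = 1.
  by case: j => [[|[|//]]] ?; [left|right]; apply/val_inj.
by []. by [].
Qed.

Theorem lemma4p8 (R : realType) (M : 'M[R]_2) (b1 b2 v1 v2 : 'rV[R]_2) :
  pos_def_sym M ->
  row_free (col_mx b1 b2) ->
  v1 != v2 ->
  bform M b1 b2 != 0 ->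
  bform M v1 v1 = bform M v2 v2 ->
  `|bform M v1 b1| = `|bform M v2 b1| ->
  `|bform M v1 b2| = `|bform M v2 b2| ->
  v1 = - v2.
Proof.
move=> [hsym hpos] hfree hne hb hvv hp hq.
have hM10 : M 1 0 = M 0 1.
  by have := congr1 (fun A : 'M[R]_2 => A 0 1) hsym; rewrite mxE.
have bE : forall x y, bform M x y = B (M 0 0) (M 0 1) (M 1 1) (x 0 0) (x 0 1) (y 0 0) (y 0 1).
  by move=> x y; rewrite bformE hM10.
set a := M 0 0 in bE; set c := M 0 1 in bE; set e := M 1 1 in bE.
have ha : 0 < a.
  have := hpos (\row_(j < 2) (if j == 0 then 1 else 0)).
  rewrite bE !mxE /B /=.
  move=> H; have : 0 < 1 * a * 1 + 0 * c * 1 + 1 * c * 0 + 0 * e * 0 :> R.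
    apply: H; apply/eqP => /rowP /(_ 0); rewrite !mxE /=; apply/eqP; exact: oner_neq0.
  by rewrite !mul0r !mulr0 !addr0 mul1r mulr1.
have hD : a * e - c ^+ 2 != 0.
  have := hpos (\row_(j < 2) (if j == 0 then c else - a)).
  rewrite bE !mxE /B /=.
  move=> H; have : 0 < c * a * c + - a * c * c + c * c * - a + - a * e * - a.
    apply: H; apply/eqP => /rowP /(_ 1); rewrite !mxE /=; apply/eqP.
    by rewrite oppr_eq0 lt0r_neq0.
  have -> : c * a * c + - a * c * c + c * c * - a + - a * e * - a = a * (a * e - c ^+ 2) by ring.
  by apply: contraTN => /eqP ->; rewrite mulr0 ltxx.
have hc : b1 0 0 * b2 0 1 - b1 0 1 * b2 0 0 != 0.
  move: hfree; rewrite row_free_unit unitmxE unitfE detE.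
  have C0 : forall j, col_mx b1 b2 0 j = b1 0 j .
    by move=> j; rewrite (_ : (0 : 'I_(1+1)) = lshift 1 0) ?col_mxEu //; apply/val_inj.
  have C1 : forall j, col_mx b1 b2 1 j = b2 0 j .
    by move=> j; rewrite (_ : (1 : 'I_(1+1)) = rshift 1 0) ?col_mxEd //; apply/val_inj.
  by rewrite !C0 !C1.
have hne' : (v1 0 0 != v2 0 0) || (v1 0 1 != v2 0 1).
  apply: contraNT hne; rewrite negb_or !negbK => /andP [/eqP h0 /eqP h1].
  by apply/eqP; apply: row2_eq.
rewrite !bE in hb hvv hp hq.
have [h0 h1] := scalar_main hD hc hb hvv hp hq hne'.
by apply: row2_eq; rewrite !mxE.
Qed.
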